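(* Let $P\in\mathbb{N}_0^{n\times n}$ be an incidence matrix that exclusively represents irreducible morphisms (resp. exclusively represents reducible morphisms), and let $1\leq i,j\leq n$. Then the matrix obtained from $P$ by swapping its $i$-th and $j$-th rows, and the matrix obtained from $P$ by swapping its $i$-th and $j$-th columns, also exclusively represent irreducible morphisms (resp. reducible morphisms).
   Context: Let $\Sigma=\{a_1,\dots,a_n\}$. A morphism $\varphi:\Sigma^+\to\Sigma^+$ (non-empty images) is Parikh-positive if every letter occurs in $\varphi(a_1)\cdots\varphi(a_n)$. Its incidence matrix is $P(\varphi)=(m_{i,j})$ with $m_{i,j}=|\varphi(a_j)|_{a_i}$. An incidence matrix is any square non-negative integer matrix; throughout, the incidence matrices considered have no zero rows or columns. An automorphism is an injective morphism mapping each letter to a single letter; a morphism is reducible if it equals $\psi_2\circ\psi_1$ with neither $\psi_1,\psi_2$ an automorphism, irreducible otherwise. An incidence matrix $P$ exclusively represents irreducible (resp. reducible) morphisms if every Parikh-positive morphism $\varphi$ with $P(\varphi)=P$ is irreducible (resp. reducible). *)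

(* Defs.v *)
From mathcomp Require Import all_boot all_algebra.
Set Implicit Arguments. Unset Strict Implicit. Unset Printing Implicit Defensive.

(* Alphabet Sigma = {a_1,...,a_n} is represented by 'I_n; letter a_k is the
   ordinal k-1.  A morphism Sigma^+ -> Sigma^+ is determined by the images of
   the letters; we represent it by its letter map 'I_n -> seq 'I_n, and require
   non-empty images (nonerasing). *)
Definition morph (n : nat) := 'I_n -> seq 'I_n.

Definition nonerasing n (phi : morph n) : Prop := forall a, phi a != [::].

Definition morph_word n (phi : morph n) (w : seq 'I_n) : seq 'I_n :=
  flatten (map phi w).

Definition morph_comp n (psi2 psi1 : morph n) : morph n :=
  fun a => morph_word psi2 (psi1 a).

Definition parikh_positive n (phi : morph n) : Prop :=
  forall b : 'I_n, b \in flatten [seq phi a | a <- enum 'I_n].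

Definition incidence n (phi : morph n) : 'M[nat]_n :=
  \matrix_(i < n, j < n) count_mem i (phi j).

Definition automorphism n (phi : morph n) : Prop :=
  (exists f : 'I_n -> 'I_n, injective f /\ forall a, phi a = [:: f a]).

Definition reducible n (phi : morph n) : Prop :=
  exists psi1 psi2 : morph n,
    [/\ nonerasing psi1, nonerasing psi2,
        ~ automorphism psi1, ~ automorphism psi2 &
        forall a, phi a = morph_comp psi2 psi1 a].

Definition irreducible n (phi : morph n) : Prop := ~ reducible phi.

Definition excl_irreducible n (P : 'M[nat]_n) : Prop :=
  forall phi : morph n, nonerasing phi -> parikh_positive phi ->
    incidence phi = P -> irreducible phi.

Definition excl_reducible n (P : 'M[nat]_n) : Prop :=
  forall phi : morph n, nonerasing phi -> parikh_positive phi ->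
    incidence phi = P -> reducible phi.

Definition no_zero_row_col n (P : 'M[nat]_n) : Prop :=
  (forall i, exists j, P i j != 0%N) /\ (forall j, exists i, P i j != 0%N).

(* Main.v *)
Require Import Defs.
From mathcomp Require Import all_boot all_algebra.
From mathcomp Require Import fingroup perm.
Set Implicit Arguments. Unset Strict Implicit. Unset Printing Implicit Defensive.

Section Aux.
Variable n : nat.
Variable s : 'I_n -> 'I_n.
Hypothesis sK : forall x, s (s x) = x.

Lemma s_inj : injective s.
Proof. exact: (can_inj sK). Qed.

Definition mapL (phi : morph n) : morph n := fun a => map s (phi a).
Definition mapR (phi : morph n) : morph n := fun a => phi (s a).

Lemma red_ext (f g : morph n) : reducible f -> (forall a, f a = g a) -> reducible g.
Proof.
move=> [p1 [p2 [h1 h2 h3 h4 h5]]] e; exists p1, p2; split => // a.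
by rewrite -e.
Qed.

Lemma redL phi : reducible phi -> reducible (mapL phi).
Proof.
move=> [p1 [p2 [h1 h2 h3 h4 h5]]]; exists p1, (mapL p2); split => //.
- by move=> a; rewrite /mapL; case: (p2 a) (h2 a).
- move=> [f [fi hf]]; apply: h4; exists (fun a => s (f a)); split.
    by move=> x y /s_inj /fi.
  by move=> a; rewrite -[p2 a]map_id -(eq_map sK) map_comp; have := hf a; rewrite /mapL => ->.
- move=> a; rewrite /mapL h5 /morph_comp /morph_word map_flatten -map_comp.
  by [].
Qed.

Lemma redR phi : reducible phi -> reducible (mapR phi).
Proof.
move=> [p1 [p2 [h1 h2 h3 h4 h5]]]; exists (mapR p1), p2; split => //.
- by move=> a; apply: h1.
- move=> [f [fi hf]]; apply: h3; exists (fun a => f (s a)); split.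
    by move=> x y /fi /s_inj.
  by move=> a; rewrite -{1}(sK a); apply: hf.
- by move=> a; rewrite /mapR h5.
Qed.

Lemma incL phi : incidence (mapL phi) = (\matrix_(a < n, b < n) incidence phi (s a) b)%R.
Proof.
apply/matrixP => a b; rewrite !mxE count_map; apply: eq_count => x /=.
apply/eqP/eqP => [<-|->]; by rewrite sK.
Qed.

Lemma incR phi : incidence (mapR phi) = (\matrix_(a < n, b < n) incidence phi a (s b))%R.
Proof. by apply/matrixP => a b; rewrite !mxE. Qed.

Lemma neL phi : nonerasing phi -> nonerasing (mapL phi).
Proof. by move=> h a; rewrite /mapL; case: (phi a) (h a). Qed.

Lemma neR phi : nonerasing phi -> nonerasing (mapR phi).
Proof. by move=> h a; apply: h. Qed.

Lemma ppL phi : parikh_positive phi -> parikh_positive (mapL phi).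
Proof.
move=> h b; have /flattenP [w /mapP [a _ ->] hb] := h (s b).
apply/flattenP; exists (mapL phi a); first by apply/mapP; exists a; rewrite ?mem_enum.
by rewrite -[b]sK; apply: map_f.
Qed.

Lemma ppR phi : parikh_positive phi -> parikh_positive (mapR phi).
Proof.
move=> h b; have /flattenP [w /mapP [a _ ->] hb] := h b.
apply/flattenP; exists (mapR phi (s a)); first by apply/mapP; exists (s a); rewrite ?mem_enum.
by rewrite /mapR sK.
Qed.

End Aux.

Theorem proposition18 (n : nat) (P : 'M[nat]_n) (i j : 'I_n) :
  no_zero_row_col P ->
  (excl_irreducible P ->
     excl_irreducible (xrow i j P) /\ excl_irreducible (xcol i j P)) /\
  (excl_reducible P ->
     excl_reducible (xrow i j P) /\ excl_reducible (xcol i j P)).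
Proof.
move=> _.
set s := (tperm i j : 'I_n -> 'I_n).
have sK : forall x, s (s x) = x by move=> x; rewrite /s tpermK.
have EL : forall phi, incidence phi = xrow i j P -> incidence (mapL s phi) = P.
  move=> phi e; rewrite (incL sK) e; apply/matrixP => a b; rewrite !mxE.
  by rewrite -/s sK.
have ER : forall phi, incidence phi = xcol i j P -> incidence (mapR s phi) = P.
  move=> phi e; rewrite (incR s) e; apply/matrixP => a b; rewrite !mxE.
  by rewrite -/s sK.
split=> H; split=> phi ne pp e.
- move=> r; apply: (H (mapL s phi)); [exact: neL|exact: ppL|exact: EL|exact: redL].
- move=> r; apply: (H (mapR s phi)); [exact: neR|exact: ppR|exact: ER|exact: redR].
- apply: (red_ext (f := mapL s (mapL s phi))).
    apply: redL => //; apply: H; [exact: neL|exact: ppL|exact: EL].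
  by move=> a; rewrite /mapL -map_comp (eq_map sK) map_id.
- apply: (red_ext (f := mapR s (mapR s phi))).
    apply: redR => //; apply: H; [exact: neR|exact: ppR|exact: ER].
  by move=> a; rewrite /mapR sK.
Qed.
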